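(* Let $p,q$ be coprime integers with $p$ odd, $q$ even and $0<q<p$. Then the crossing number of the semi-even expansion of $p/q$ is less than or equal to the crossing number of the even expansion of $p/q$.
   Context: For a continued fraction $[a_1,\ldots,a_n]=a_1+\cfrac{1}{a_2+\cfrac{1}{\cdots+\cfrac{1}{a_n}}}$ with integer entries, its crossing number is $\sum_{i=1}^n|a_i|$. Both expansions are produced by the following procedure, which depends on a rule specifying at which steps $k$ the entry is required to be even. Start with $x_1=p/q$ and $\varepsilon_1=+1$. At step $k$, write $x_k=P_k/Q_k>0$ in lowest terms and divide with positive remainder: $P_k=cQ_k+r$ with integers $c$ and $0\le r<Q_k$. If step $k$ is required to be even and $c$ is odd, set $c_k=c+1$ and $r_k=r-Q_k$; otherwise set $c_k=c$ and $r_k=r$. Put $a_k=\varepsilon_k c_k$. If $r_k=0$, stop and output $[a_1,\ldots,a_k]$; otherwise set $x_{k+1}=Q_k/|r_k|$ and $\varepsilon_{k+1}=\varepsilon_k\cdot\mathrm{sign}(r_k)$ and continue. (One has $\varepsilon_k x_k=a_k+1/(\varepsilon_{k+1}x_{k+1})$, so the output is a continued fraction equal to $p/q$, and the procedure terminates.) The even expansion of $p/q$ is the output when every step $k$ is required to be even (all entries are then even). The semi-even expansion of $p/q$ is the output when exactly the steps with even index $k$ are required to be even (entries in odd positions are obtained by ordinary division with nonnegative remainder). For example, for $13/8$ the even expansion is $[2,-2,-2,2]$ (crossing number $8$) and the semi-even expansion is $[1,2,-2,-2]$ (crossing number $7$). *)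

(* Defs.v *)
From mathcomp Require Import all_boot all_order all_algebra.
Set Implicit Arguments. Unset Strict Implicit. Unset Printing Implicit Defensive.
Import GRing.Theory Num.Theory.
Local Open Scope ring_scope.

(* One run of the expansion procedure, with fuel.
   [req k] : step k is required to be even.
   [k]     : current step index (steps are numbered from 1).
   [eps]   : true means eps_k = +1, false means eps_k = -1.
   [P] [Q] : x_k = P/Q (reduced to lowest terms at each step). *)
Fixpoint cf_expand (req : nat -> bool) (fuel k : nat) (eps : bool) (P0 Q0 : nat)
  : option (seq int) :=
  match fuel with
  | 0 => None
  | fuel'.+1 =>
    let g := gcdn P0 Q0 in
    let P := (P0 %/ g)%N in
    let Q := (Q0 %/ g)%N in
    let c := (P %/ Q)%N in
    let r := (P %% Q)%N in
    let sgn : int := if eps then 1 else -1 in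
    if req k && odd c then
      (* c_k = c + 1, r_k = r - Q < 0, |r_k| = Q - r, eps_{k+1} = - eps_k *)
      let a := sgn * (c.+1)%:Z in
      match cf_expand req fuel' k.+1 (~~ eps) Q (Q - r)%N with
      | Some s => Some (a :: s)
      | None => None
      end
    else
      let a := sgn * c%:Z in
      if r == 0%N then Some [:: a]
      else match cf_expand req fuel' k.+1 eps Q r with
           | Some s => Some (a :: s)
           | None => None
           end
  end.

(* Fuel p + q is more than enough (the denominators strictly decrease,
   except in a case where the procedure stops at the next step). *)
Definition even_expansion (p q : nat) : option (seq int) :=
  cf_expand (fun _ => true) (p + q).+1 1 true p q.

Definition semi_even_expansion (p q : nat) : option (seq int) :=
  cf_expand (fun k => ~~ odd k) (p + q).+1 1 true p q.

Definition crossing_number (s : seq int) : nat := (\sum_(a <- s) `|a|)%N.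

Example ex_even : even_expansion 13 8 = Some [:: 2; -2; -2; 2]. Proof. by []. Qed.
Example ex_semi : semi_even_expansion 13 8 = Some [:: 1; 2; -2; -2]. Proof. by []. Qed.

(* Main.v *)
Require Import Defs.
From mathcomp Require Import all_boot all_order all_algebra.
From mathcomp Require Import zify.
Import GRing.Theory.

Fixpoint Sf (fuel P Q : nat) : nat :=
  match fuel with
  | 0 => 0
  | f.+1 =>
    if ~~ odd P && odd (P %/ Q) then (P %/ Q).+1 + Sf f Q (Q - P %% Q)
    else if P %% Q == 0 then P %/ Q else P %/ Q + Sf f Q (P %% Q)
  end.

Fixpoint Ef (fuel P Q : nat) : nat :=
  match fuel with
  | 0 => 0
  | f.+1 =>
    if odd (P %/ Q) then (P %/ Q).+1 + Ef f Q (Q - P %% Q)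
    else if P %% Q == 0 then P %/ Q else P %/ Q + Ef f Q (P %% Q)
  end.

Lemma SfS f P Q : Sf f.+1 P Q =
    if ~~ odd P && odd (P %/ Q) then (P %/ Q).+1 + Sf f Q (Q - P %% Q)
    else if P %% Q == 0 then P %/ Q else P %/ Q + Sf f Q (P %% Q).
Proof. by []. Qed.

Definition valid P Q := [&& coprime P Q, odd P != odd Q & 0 < Q].

Lemma oddmod P Q : odd (P %% Q) = odd P (+) (odd (P %/ Q) && odd Q).
Proof.
rewrite {2}(divn_eq P Q) oddD oddM.
by case: (odd (P %/ Q)); case: (odd Q); case: (odd (P %% Q)).
Qed.

Lemma valid_oddQ P Q : valid P Q -> odd Q = ~~ odd P.
Proof. by case/and3P => _; case: (odd P); case: (odd Q). Qed.

Arguments valid_oddQ {P Q}.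
Lemma next_r P Q : valid P Q -> ~~ odd (P %/ Q) -> P %% Q != 0 -> valid Q (P %% Q).
Proof.
move=> v; have oQ := valid_oddQ v; case/and3P: v => cop _ _ oc r0.
apply/and3P; split.
- by rewrite /coprime gcdn_modr gcdnC.
- by rewrite oddmod (negbTE oc) /= addbF oQ; case: (odd P).
- by rewrite lt0n.
Qed.

Arguments next_r {P Q}.
Lemma gcd_sub s r : gcdn (s + r) r = 1 -> gcdn (s + r) s = 1.
Proof. by rewrite gcdnC gcdnDr gcdnC => <-; rewrite gcdnC gcdnDl. Qed.

Lemma next_s P Q : valid P Q -> odd (P %/ Q) ->
  valid Q (Q - P %% Q) /\ 0 < P %% Q.
Proof.
move=> v; have oQ := valid_oddQ v; case/and3P: v => cop _ Q0 oc.
have orr : odd (P %% Q) by rewrite oddmod oc /= oQ; case: (odd P).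
have rQ : P %% Q < Q by rewrite ltn_mod.
split; last by apply: odd_gt0.
apply/and3P; split.
- have e : Q = (Q - P %% Q) + P %% Q by lia.
  have c1 : gcdn Q (P %% Q) = 1 by rewrite gcdn_modr gcdnC; apply/eqP.
  apply/eqP; have := gcd_sub (Q - P %% Q) (P %% Q); rewrite -e; exact.

- by rewrite oddB ?orr; [case: (odd Q)| lia].
- lia.
Qed.

Arguments next_s {P Q}.
Lemma abs_sgn (eps : bool) (c : nat) :
  `|((if eps then 1 else -1) * c%:Z)%R|%N = c.
Proof. by case: eps; rewrite ?mul1r ?mulN1r ?abszN absz_nat. Qed.

Lemma cn_cons a s : crossing_number (a :: s) = (`|a| + crossing_number s)%N.
Proof. by rewrite /crossing_number big_cons. Qed.

Lemma conn_even fuel : forall k eps P Q, valid P Q -> Q <= fuel ->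
  exists s, cf_expand (fun _ => true) fuel k eps P Q = Some s /\
            crossing_number s = Ef fuel P Q.
Proof.
elim: fuel => [|f IH] k eps P Q v hQ.
  by case/and3P: v => _ _; lia.
have cop : gcdn P Q = 1 by case/and3P: v => /eqP.
rewrite /= cop !divn1 /=.
case oc: (odd (P %/ Q)).
  have [v' r0] := next_s v oc.
  have [s [-> cs]] := IH k.+1 (~~ eps) Q (Q - P %% Q) v' ltac:(lia).
  by exists (((if eps then 1 else -1) * (P %/ Q).+1%:Z)%R :: s); rewrite cn_cons abs_sgn cs.
case r0: (P %% Q == 0).
  by eexists; split; first reflexivity; rewrite cn_cons abs_sgn /crossing_number big_nil addn0.
have v' := next_r v (negbT oc) (negbT r0).
have hr : P %% Q < Q by rewrite ltn_mod; case/and3P: v.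
have [s [-> cs]] := IH k.+1 eps Q (P %% Q) v' ltac:(lia).
by eexists; split; first reflexivity; rewrite cn_cons abs_sgn cs.
Qed.

Lemma conn_semi fuel : forall k eps P Q, valid P Q -> odd k = odd P -> Q <= fuel ->
  exists s, cf_expand (fun k => ~~ odd k) fuel k eps P Q = Some s /\
            crossing_number s = Sf fuel P Q.
Proof.
elim: fuel => [|f IH] k eps P Q v ok hQ.
  by case/and3P: v => _ _; lia.
have cop : gcdn P Q = 1 by case/and3P: v => /eqP.
have ok' : odd k.+1 = odd Q by rewrite oddS ok (valid_oddQ v).
rewrite /= cop !divn1 ok /=.
case oc: (~~ odd P && odd (P %/ Q)).
  case/andP: oc => _ oc.
  have [v' r0] := next_s v oc.
  have [s [-> cs]] := IH k.+1 (~~ eps) Q (Q - P %% Q) v' ok' ltac:(lia).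
  by exists (((if eps then 1 else -1) * (P %/ Q).+1%:Z)%R :: s); rewrite cn_cons abs_sgn cs.
case r0: (P %% Q == 0).
  by eexists; split; first reflexivity; rewrite cn_cons abs_sgn /crossing_number big_nil addn0.
have hr : P %% Q < Q by rewrite ltn_mod; case/and3P: v.
have v' : valid Q (P %% Q).
  case oP: (odd P).
    apply/and3P; split.
    - by rewrite /coprime gcdn_modr gcdnC cop.
    - by rewrite oddmod oP (valid_oddQ v) oP /= andbF.
    - by rewrite lt0n r0.
  by move: oc; rewrite oP /= => oc; apply: next_r => //; rewrite ?oc ?r0.
have [s [-> cs]] := IH k.+1 eps Q (P %% Q) v' ok' ltac:(lia).
by eexists; split; first reflexivity; rewrite cn_cons abs_sgn cs.
Qed.

Lemma next_r2 P Q : valid P Q -> ~~ (~~ odd P && odd (P %/ Q)) -> P %% Q != 0 ->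
  valid Q (P %% Q).
Proof.
move=> v; have oQ := valid_oddQ v; case/and3P: v => cop _ _ oc r0.
apply/and3P; split.
- by rewrite /coprime gcdn_modr gcdnC.
- move: oc; rewrite oddmod oQ; case: (odd P); case: (odd (P %/ Q)) => //.
- by rewrite lt0n.
Qed.
Arguments next_r2 {P Q}.

Lemma Sf_fuel f1 : forall f2 P Q, valid P Q -> Q <= f1 -> Q <= f2 ->
  Sf f1 P Q = Sf f2 P Q.
Proof.
elim: f1 => [|f1 IH] f2 P Q v h1 h2.
  by case/and3P: v => _ _; lia.
case: f2 h2 => [|f2] h2.
  by case/and3P: v => _ _; lia.
rewrite !SfS.
case oc: (~~ odd P && odd (P %/ Q)).
  case/andP: oc => _ oc.
  have [v' r0] := next_s v oc.
  by rewrite (IH f2 _ _ v'); lia.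
case r0: (P %% Q == 0) => //.
have v' := next_r2 v (negbT oc) (negbT r0).
have hr : P %% Q < Q by rewrite ltn_mod; case/and3P: v.
by rewrite (IH f2 _ _ v'); lia.
Qed.

Lemma lemB f P Q : odd P -> ~~ odd Q -> 0 < Q ->
  Sf f.+1 (Q + P) Q = (Sf f.+1 P Q).+1.
Proof.
move=> oP oQ Q0; rewrite !SfS.
have e : Q + P = 1 * Q + P by rewrite mul1n.
have o1 : odd (Q + P) by rewrite oddD oP (negbTE oQ).
rewrite o1 oP /= e divnMDl // modnMDl.
have : odd (P %% Q) by rewrite oddmod oP (negbTE oQ) andbF.
by case: (P %% Q == 0) /eqP => [->|_ _] //; rewrite add1n addSn.
Qed.

Lemma lemC f P Q : ~~ odd P -> 0 < Q ->
  Sf f.+1 (Q + Q + P) Q = (Sf f.+1 P Q).+2.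
Proof.
move=> oP Q0; rewrite !SfS.
have e : Q + Q + P = 2 * Q + P by rewrite mul2n addnn.
have o1 : odd (Q + Q + P) = odd P by rewrite !oddD addbb.
rewrite o1 e divnMDl // modnMDl /= oP /=.
case: (odd (P %/ Q)) => /=; first lia.
case: (P %% Q == 0) => /=; lia.
Qed.

Lemma divE q b a : a < b -> (q * b + a) %/ b = q.
Proof. move=> h; rewrite divnMDl ?divn_small ?addn0 //; lia. Qed.
Lemma modE q b a : a < b -> (q * b + a) %% b = a.
Proof. by move=> h; rewrite modnMDl modn_small. Qed.
Lemma divE' x q b a : x = q * b + a -> a < b -> x %/ b = q.
Proof. by move=> -> /divE. Qed.
Lemma modE' x q b a : x = q * b + a -> a < b -> x %% b = a.
Proof. by move=> -> /modE. Qed.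

Lemma lemA F r d : odd r -> ~~ odd d -> 0 < d -> coprime r d -> r + d <= F ->
  Sf F (r + (r + d)) (r + d) = (Sf F (r + (r + d)) r).+1.
Proof.
move=> or od d0 cop hF.
have r0 : 0 < r by apply: odd_gt0.
case: F hF => [|F1] hF; first lia.
have os : odd (r + d) by rewrite oddD or (negbTE od).
have o2 : odd (r + (r + d)) = false by rewrite oddD or os.
have q1 : (r + (r + d)) %/ (r + d) = 1 by apply: (@divE' _ _ _ r); lia.
have m1 : (r + (r + d)) %% (r + d) = r by apply: (@modE' _ 1); lia.
have hL : Sf F1.+1 (r + (r + d)) (r + d) = 2 + Sf F1 (r + d) d.
  by rewrite SfS o2 q1 m1 /= (_ : r + d - r = d) //; lia.
rewrite hL.
case: (ltnP d r) => hdr.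
  case: F1 hF hL => [|F2] hF hL; first lia.
  have eB : Sf F2.+1 (r + d) d = (Sf F2.+1 r d).+1 by rewrite addnC lemB.
  have q2 : (r + (r + d)) %/ r = 2 by apply: (@divE' _ _ _ d); lia.
  have m2 : (r + (r + d)) %% r = d by apply: (@modE' _ 2); lia.
  have hR : Sf F2.+2 (r + (r + d)) r = 2 + Sf F2.+1 r d.
    by rewrite SfS o2 q2 m2 /= (_ : (d == 0) = false) //; lia.
  rewrite eB hR; lia.
have hrd : r < d.
  rewrite ltn_neqAle hdr andbT; apply/eqP => e; move: od; by rewrite -e or.
case: F1 hF hL => [|F2] hF hL; first lia.
have q2 : (r + d) %/ d = 1 by apply: (@divE' _ _ _ r); lia.
have m2 : (r + d) %% d = r by apply: (@modE' _ 1); lia.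
have hL2 : Sf F2.+1 (r + d) d = 1 + Sf F2 d r.
  by rewrite SfS os q2 m2 /= (_ : (r == 0) = false) //; lia.
case: F2 hF hL hL2 => [|F3] hF hL hL2; first lia.
have hR : Sf F3.+3 (r + (r + d)) r = (Sf F3.+3 d r).+2 by rewrite addnA lemC.
have vdr : valid d r.
  apply/and3P; split => //; last by rewrite or (negbTE od).
  by rewrite coprime_sym.
have d1 : d != 1 by apply/eqP => e; rewrite e in od.
rewrite hL2 hR (Sf_fuel F3.+1 F3.+3 d r vdr); lia.
Qed.

Lemma lemA' F Q r : ~~ odd Q -> odd r -> r < Q -> coprime Q r -> Q <= F.+1 ->
  Sf F Q r <= (Sf F Q (Q - r)).+1.
Proof.
move=> oQ or rQ cop hF.
have [s eQ] : exists s, Q = r + s by exists (Q - r); lia.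
subst Q; rewrite addKn.
have os : odd s by move: oQ; rewrite oddD or; case: (odd s).
case: (ltngtP r s) => hrs; last by subst s; lia.
- have [d es] : exists d, s = r + d by exists (s - r); lia.
  subst s.
  have od : ~~ odd d by move: os; rewrite oddD or; case: (odd d).
  have cd : coprime r d by move: cop; rewrite /coprime gcdnC !gcdnDl.
  rewrite lemA //; lia.
- have [d er] : exists d, r = s + d by exists (r - s); lia.
  subst r.
  have od : ~~ odd d by move: or; rewrite oddD os; case: (odd d).
  have cd : coprime s d.
    by move: cop; rewrite /coprime gcdnC gcdnDl gcdnC gcdnDl.
  have -> : s + d + s = s + (s + d) by lia.
  rewrite lemA //; lia.
Qed.

Lemma mainM F : forall P Q, valid P Q -> Q <= F -> Sf F P Q <= Ef F P Q.
Proof.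
elim: F => [|F IH] P Q v hQ; first by [].
rewrite SfS /=.
have hr : P %% Q < Q by rewrite ltn_mod; case/and3P: v.
case oP: (odd P) => /=.
  case oc: (odd (P %/ Q)).
    have [v' r0] := next_s v oc.
    have -> : (P %% Q == 0) = false by lia.
    have h1 := IH _ _ v' ltac:(lia).
    have oQ : ~~ odd Q by rewrite (valid_oddQ v) oP.
    have or : odd (P %% Q) by rewrite oddmod oP (negbTE oQ) andbF.
    have cop : coprime Q (P %% Q) by rewrite /coprime gcdn_modr gcdnC; case/and3P: v.
    have h2 := lemA' F Q (P %% Q) oQ or hr cop hQ.
    lia.
  case r0: (P %% Q == 0) => //.
  have v' := next_r v (negbT oc) (negbT r0).
  have := IH _ _ v' ltac:(lia); lia.
case oc: (odd (P %/ Q)).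
  have [v' r0] := next_s v oc.
  have := IH _ _ v' ltac:(lia); lia.
case r0: (P %% Q == 0) => //.
have v' := next_r v (negbT oc) (negbT r0).
have := IH _ _ v' ltac:(lia); lia.
Qed.

Theorem proposition5 (p q : nat) :
  coprime p q -> odd p -> ~~ odd q -> (0 < q < p)%N ->
  exists se e : seq int,
    semi_even_expansion p q = Some se /\ even_expansion p q = Some e /\
    (crossing_number se <= crossing_number e)%N.
Proof.
move=> cop op oq /andP [q0 qp].
have v : valid p q by apply/and3P; split => //; rewrite op; case: (odd q) oq.
have [se [hse cse]] := conn_semi (p + q).+1 1 true p q v (esym op) ltac:(lia).
have [e [he ce]] := conn_even (p + q).+1 1 true p q v ltac:(lia).
exists se, e; split; first exact: hse.
split; first exact: he.
rewrite cse ce; apply: mainM => //; lia.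
Qed.
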